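(* Let $c>0$, $\lambda>0$, and for $t>0$, $\mathbf{y}\in\mathbb{R}^3$ with $\|\mathbf{y}\|<ct$ let $$p(\mathbf{y},t)=\frac{\lambda}{2c}\frac{1}{\pi(e^{\lambda t}-1)}\sum_{k=0}^{\infty}\left(\frac{\lambda}{2c}\right)^{k+1}\frac{\left(\sqrt{c^2t^2-\|\mathbf{y}\|^2}\right)^{k-1}}{\Gamma(\frac{k+1}{2})\Gamma(\frac{k+3}{2})},$$ the density of the absolutely continuous component of the law of the three-dimensional random flight $\mathbf{Y}_3(t)$ described in the context. Then $u=p$ satisfies, in $\{(\mathbf{y},t):t>0,\|\mathbf{y}\|<ct\}$, the non-homogeneous telegraph-type equation with variable coefficients $$\left(\frac{\partial^2}{\partial t^2}+c_1(t)\frac{\partial}{\partial t}-c^2\Delta\right)u(\mathbf{y},t)=c_2(t)u(\mathbf{y},t)+c_3(\mathbf{y},t),$$ where $\Delta=\sum_{j=1}^3\partial^2/\partial y_j^2$ and $$c_1(t)=\frac{2\lambda e^{\lambda t}}{e^{\lambda t}-1},\qquad c_2(t)=-\frac{\lambda^2}{e^{\lambda t}-1},\qquad c_3(\mathbf{y},t)=\frac{\lambda^2}{\sqrt{\pi^3}(e^{\lambda t}-1)}\frac{(c^2t^2-\|\mathbf{y}\|^2)^{-3/2}}{\Gamma(-\frac12)}.$$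
   Context: The random flight $\mathbf{Y}_3(t)$ in $\mathbb{R}^3$: a particle starts at the origin, moves at constant speed $c$, with independent uniformly distributed directions on $S^2$ for successive segments; given $\mathcal{N}_3(t)=k$ changes of direction in $(0,t)$, the segment durations $(\tau_1,\dots,\tau_{k+1})$, $\sum\tau_j=t$, have the rescaled Dirichlet law with all parameters $1/2$, and $P\{\mathcal{N}_3(t)=k\}=\frac{1}{E_{1,2}(\lambda t)}\frac{(\lambda t)^k}{(k+1)!}=\frac{(\lambda t)^{k+1}}{(e^{\lambda t}-1)(k+1)!}$. The function $p$ above is the density of the absolutely continuous part of the law of $\mathbf{Y}_3(t)$. *)

(* Defs.v *)
From Stdlib Require Import Reals ZArith.
From Coquelicot Require Import Coquelicot.
Open Scope R_scope.

Definition Gamma_pos (x : R) : R :=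
  RInt_gen (fun s => Rpower s (x - 1) * exp (- s)) (at_right 0) (Rbar_locally p_infty).

Fixpoint poch (x : R) (n : nat) : R :=
  match n with
  | O => 1
  | S m => poch x m * (x + INR m)
  end.

(* Standard analytic continuation via the functional equation:
   Gamma x = Gamma (x+n) / (x (x+1) ... (x+n-1)) with n the least natural
   making x+n > 0 (n = 0 when x > 0). *)
Definition Gamma (x : R) : R :=
  let n := Z.to_nat (up (- x)) in Gamma_pos (x + INR n) / poch x n.

Definition norm3 (y1 y2 y3 : R) : R := sqrt (y1 ^ 2 + y2 ^ 2 + y3 ^ 2).

Definition p_dens (c lam : R) (y1 y2 y3 t : R) : R :=
  lam / (2 * c) * (1 / (PI * (exp (lam * t) - 1))) *
  Series (fun k : nat =>
    (lam / (2 * c)) ^ (k + 1) *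
    Rpower (sqrt (c ^ 2 * t ^ 2 - (norm3 y1 y2 y3) ^ 2)) (INR k - 1) /
    (Gamma ((INR k + 1) / 2) * Gamma ((INR k + 3) / 2))).

Definition coef1 (lam t : R) : R := 2 * lam * exp (lam * t) / (exp (lam * t) - 1).
Definition coef2 (lam t : R) : R := - (lam ^ 2 / (exp (lam * t) - 1)).
Definition coef3 (c lam : R) (y1 y2 y3 t : R) : R :=
  lam ^ 2 / (sqrt (PI ^ 3) * (exp (lam * t) - 1)) *
  (Rpower (c ^ 2 * t ^ 2 - (norm3 y1 y2 y3) ^ 2) (- (3 / 2)) / Gamma (- (1 / 2))).

Definition twice_derivable (f : R -> R) (x : R) : Prop :=
  ex_derive f x /\ ex_derive (fun s => Derive f s) x.
Definition D2 (f : R -> R) (x : R) : R := Derive (fun s => Derive f s) x.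

(* Main.v *)
Require Import Defs.
From Stdlib Require Import Reals ZArith Lra Lia.
From Coquelicot Require Import Coquelicot.
Open Scope R_scope.

Definition gf (t : R) := exp (- (t * t)).
Definition E (x : R) := RInt gf 0 x.

Lemma gf_cont x : continuous gf x.
Proof.
  apply (@ex_derive_continuous R_AbsRing R_NormedModule). unfold gf. auto_derive. auto.
Qed.

Lemma ex_RInt_gf a b : ex_RInt gf a b.
Proof.
  apply (@ex_RInt_continuous R_CompleteNormedModule). intros; apply gf_cont.
Qed.

Lemma E_deriv x : is_derive E x (gf x).
Proof.
  unfold E. apply (is_derive_RInt gf _ 0).
  - exists (mkposreal 1 Rlt_0_1). intros y _. apply (@RInt_correct R_CompleteNormedModule), ex_RInt_gf.
  - apply gf_cont.
Qed.

Definition uf (x t : R) := exp (- (x * x) * (1 + t * t)) / (1 + t * t).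
Definition duf (x t : R) := -2 * x * exp (- (x * x) * (1 + t * t)).
Definition U (x : R) := RInt (uf x) 0 1.

Lemma pos1t t : 0 < 1 + t * t.
Proof. nra. Qed.

Lemma uf_deriv x t : is_derive (fun u => uf u t) x (duf x t).
Proof.
  unfold uf, duf. auto_derive. generalize (pos1t t); lra.
  field. generalize (pos1t t); lra.
Qed.

Lemma duf_cont x t : continuity_2d_pt duf x t.
Proof.
  unfold duf.
  apply continuity_2d_pt_mult.
  apply continuity_2d_pt_mult. apply continuity_2d_pt_const. apply continuity_2d_pt_id1.
  apply continuity_1d_2d_pt_comp. apply derivable_continuous_pt, derivable_pt_exp.
  apply continuity_2d_pt_mult. apply continuity_2d_pt_opp.
  apply continuity_2d_pt_mult; apply continuity_2d_pt_id1.
  apply continuity_2d_pt_plus. apply continuity_2d_pt_const.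
  apply continuity_2d_pt_mult; apply continuity_2d_pt_id2.
Qed.

Lemma uf_cont x t : continuous (uf x) t.
Proof.
  apply (@ex_derive_continuous R_AbsRing R_NormedModule). unfold uf. auto_derive.
  generalize (pos1t t); lra.
Qed.

Lemma U_deriv x : is_derive U x (-2 * exp (- (x*x)) * E x).
Proof.
  assert (H : is_derive U x (RInt (fun t => Derive (fun u => uf u t) x) 0 1)).
  { unfold U. apply (is_derive_RInt_param uf 0 1 x).
    - apply filter_forall. intros x0 t _. eexists. apply uf_deriv.
    - intros t _. apply continuity_2d_pt_ext with duf.
      intros u v. symmetry. apply is_derive_unique, uf_deriv.
      apply duf_cont.
    - apply filter_forall. intros y.
      apply (@ex_RInt_continuous R_CompleteNormedModule). intros; apply uf_cont. }
  replace (-2 * exp (- (x*x)) * E x) with (RInt (fun t => Derive (fun u => uf u t) x) 0 1).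
  exact H.
  rewrite (RInt_ext _ (fun t => scal (-2 * exp (- (x*x))) (scal x (gf (x * t + 0))))).
  2:{ intros t _. transitivity (duf x t). apply is_derive_unique, uf_deriv. unfold duf, gf, scal; simpl.
      unfold mult; simpl. replace (- (x * x) * (1 + t * t)) with (- (x*x) + - ((x*t+0)*(x*t+0))) by ring.
      rewrite exp_plus. ring. }
  rewrite (@RInt_scal R_CompleteNormedModule).
  2:{ apply (@ex_RInt_continuous R_CompleteNormedModule). intros.
      apply (@ex_derive_continuous R_AbsRing R_NormedModule). unfold gf, scal; simpl; unfold mult; simpl. auto_derive. auto. }
  rewrite (@RInt_comp_lin R_CompleteNormedModule).
  2:{ apply ex_RInt_gf. }
  unfold E, scal; simpl; unfold mult; simpl. f_equal. f_equal; ring.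
Qed.

Definition hh (x : R) := E x * E x + U x.

Lemma hh_deriv x : is_derive hh x 0.
Proof.
  unfold hh. replace 0 with (gf x * E x + E x * gf x + (-2 * exp (- (x*x)) * E x)).
  apply (@is_derive_plus R_AbsRing R_NormedModule).
  apply (@is_derive_mult R_AbsRing); try apply E_deriv. intros; apply Rmult_comm.
  apply U_deriv. unfold gf; ring.
Qed.

Lemma hh_const x : hh x = hh 0.
Proof.
  assert (H1 := @is_RInt_derive R_CompleteNormedModule hh (fun _ => 0) 0 x
     (fun y _ => hh_deriv y) (fun y _ => continuous_const (U:=R_UniformSpace) (V:=R_UniformSpace) 0 y)).
  assert (H2 := @is_RInt_const R_CompleteNormedModule 0 x 0).
  assert (H := @is_RInt_unique R_CompleteNormedModule _ _ _ _ H1).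
  assert (H' := @is_RInt_unique R_CompleteNormedModule _ _ _ _ H2).
  rewrite H in H'. unfold minus, plus, opp, scal in H'; simpl in H'.
  unfold mult in H'; simpl in H'. lra.
Qed.

Lemma U0 : U 0 = PI / 4.
Proof.
  unfold U.
  rewrite (RInt_ext (V:=R_CompleteNormedModule) _ (fun t => / (1 + t * t))).
  2:{ intros t _. unfold uf. replace (- (0*0) * (1+t*t)) with 0 by ring. rewrite exp_0. unfold Rdiv; apply Rmult_1_l. }
  assert (H1 : forall y, Rmin 0 1 <= y <= Rmax 0 1 -> is_derive atan y (/ (1 + y * y))).
  { intros y _. apply is_derive_Reals.
    assert (Hd := derivable_pt_lim_atan y). replace (y^2) with (y*y) in Hd by ring. exact Hd. }
  assert (H2 : forall y, Rmin 0 1 <= y <= Rmax 0 1 -> continuous (fun t => / (1 + t * t)) y).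
  { intros y _. apply (@ex_derive_continuous R_AbsRing R_NormedModule). auto_derive.
    generalize (pos1t y); lra. }
  assert (H := @is_RInt_derive R_CompleteNormedModule atan (fun t => / (1 + t * t)) 0 1 H1 H2).
  rewrite (is_RInt_unique _ _ _ _ H).
  unfold minus, plus, opp; simpl. rewrite atan_1, atan_0. lra.
Qed.

Lemma E2 x : E x * E x = PI / 4 - U x.
Proof.
  generalize (hh_const x). unfold hh. rewrite U0.
  unfold E at 3 4. rewrite RInt_point. unfold zero; simpl. lra.
Qed.

Lemma exp_mono a b : a <= b -> exp a <= exp b.
Proof. intros [H|H]. apply Rlt_le, exp_increasing, H. subst; lra. Qed.

Lemma U_bounds x : 0 <= U x <= exp (- (x * x)).
Proof.
  unfold U. split.
  - apply RInt_ge_0. lra. apply (@ex_RInt_continuous R_CompleteNormedModule). intros; apply uf_cont.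
    intros t _. unfold uf. apply Rle_mult_inv_pos. apply Rlt_le, exp_pos. apply pos1t.
  - apply Rle_trans with (RInt (fun _ => exp (- (x * x))) 0 1).
    apply RInt_le. lra. apply (@ex_RInt_continuous R_CompleteNormedModule). intros; apply uf_cont.
    apply ex_RInt_const.
    intros t Ht. unfold uf.
    apply Rle_trans with (exp (- (x * x) * (1 + t * t))).
    { unfold Rdiv. rewrite <- (Rmult_1_r (exp _)) at 2. apply Rmult_le_compat_l. apply Rlt_le, exp_pos.
      rewrite <- Rinv_1. apply Rinv_le_contravar. lra. nra. }
    apply exp_mono. nra.
    rewrite RInt_const. unfold scal; simpl; unfold mult; simpl. lra.
Qed.

Lemma E_ge0 x : 0 <= x -> 0 <= E x.
Proof.
  intros Hx. unfold E. apply RInt_ge_0. lra. apply ex_RInt_gf.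
  intros; unfold gf; apply Rlt_le, exp_pos.
Qed.

Lemma E_bound x : 0 <= x -> Rabs (E x - sqrt PI / 2) <= 2 * exp (- (x * x)) / sqrt PI.
Proof.
  intros Hx.
  assert (HP : 0 < sqrt PI) by (apply sqrt_lt_R0, PI_RGT_0).
  assert (HP2 : sqrt PI * sqrt PI = PI) by (apply sqrt_sqrt; generalize PI_RGT_0; lra).
  generalize (E2 x) (U_bounds x) (E_ge0 x Hx). intros H2 [H3 H4] H5.
  set (e := E x) in *. set (s := sqrt PI) in *.
  assert (Heq : e - s/2 = - U x / (e + s/2)).
  { field_simplify_eq. nra. lra. }
  rewrite Heq. rewrite Rabs_div by lra. rewrite Rabs_Ropp, Rabs_pos_eq by lra.
  rewrite Rabs_pos_eq by lra.
  apply Rle_trans with (U x / (s/2)).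
  { unfold Rdiv. apply Rmult_le_compat_l. lra. apply Rinv_le_contravar; lra. }
  replace (2 * exp (- (x*x)) / s) with (exp (- (x*x)) / (s/2)) by (field; lra).
  unfold Rdiv; apply Rmult_le_compat_r. apply Rlt_le, Rinv_0_lt_compat; lra. lra.
Qed.


Lemma ballR (x e y : R) : ball x e y <-> Rabs (y - x) < e.
Proof. reflexivity. Qed.

Lemma locally_pos x : 0 < x -> locally x (fun y => 0 < y).
Proof.
  intros Hx. exists (mkposreal x Hx). intros y Hy. assert (H : Rabs (y - x) < x) by exact Hy.
  apply Rabs_lt_between in H. lra.
Qed.

Lemma at_right_pos : at_right 0 (fun a => 0 < a).
Proof. exists (mkposreal 1 Rlt_0_1). intros y _ H; exact H. Qed.

Lemma pinf_pos : Rbar_locally p_infty (fun b => 0 < b).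
Proof. exists 0. intros; lra. Qed.

Lemma prod_pos (P : R -> Prop) :
  (forall x, 0 < x -> P x) ->
  filter_prod (at_right 0) (Rbar_locally p_infty)
    (fun ab : R * R => forall x, Rmin (fst ab) (snd ab) <= x <= Rmax (fst ab) (snd ab) -> P x).
Proof.
  intros HP. apply Filter_prod with (fun a => 0 < a) (fun b => 0 < b).
  apply at_right_pos. apply pinf_pos.
  intros a b Ha Hb x Hx. simpl in Hx. apply HP.
  assert (0 < Rmin a b) by (apply Rmin_glb_lt; lra). lra.
Qed.

Lemma prod_pos' (P : R -> Prop) :
  (forall x, 0 < x -> P x) ->
  filter_prod (at_right 0) (Rbar_locally p_infty)
    (fun ab : R * R => forall x, Rmin (fst ab) (snd ab) < x < Rmax (fst ab) (snd ab) -> P x).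
Proof.
  intros HP. apply Filter_prod with (fun a => 0 < a) (fun b => 0 < b).
  apply at_right_pos. apply pinf_pos.
  intros a b Ha Hb x Hx. simpl in Hx. apply HP.
  assert (0 < Rmin a b) by (apply Rmin_glb_lt; lra). lra.
Qed.

Lemma RInt_gen_pos (F f : R -> R) la lb :
  (forall x, 0 < x -> is_derive F x (f x)) -> (forall x, 0 < x -> continuous f x) ->
  filterlim F (at_right 0) (locally la) -> filterlim F (Rbar_locally p_infty) (locally lb) ->
  is_RInt_gen f (at_right 0) (Rbar_locally p_infty) (lb - la).
Proof.
  intros HD HC Ha Hb.
  apply (is_RInt_gen_ext (Derive F)).
  apply prod_pos'. intros x Hx. apply is_derive_unique, HD, Hx.
  apply is_RInt_gen_Derive; auto.
  - apply prod_pos. intros x Hx. eexists; apply HD, Hx.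
  - apply prod_pos. intros x Hx. apply (@continuous_ext_loc R_UniformSpace R_UniformSpace (Derive F) f x).
    generalize (locally_pos x Hx). apply filter_imp. intros y Hy. symmetry. apply is_derive_unique, HD, Hy.
    apply HC, Hx.
Qed.

Definition gi (x s : R) := Rpower s (x - 1) * exp (- s).

Definition A (s : R) := 2 * E (sqrt s).

Lemma A_deriv s : 0 < s -> is_derive A s (exp (- s) / sqrt s).
Proof.
  intros Hs. unfold A.
  assert (Hq : 0 < sqrt s) by (apply sqrt_lt_R0, Hs).
  assert (H1 : is_derive sqrt s (/ (2 * sqrt s))) by (apply is_derive_Reals, derivable_pt_lim_sqrt, Hs).
  assert (H2 := is_derive_comp E sqrt s _ _ (E_deriv (sqrt s)) H1).
  assert (H3 := is_derive_scal _ s 2 _ H2).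
  replace (exp (- s) / sqrt s) with (2 * scal (/ (2 * sqrt s)) (gf (sqrt s))).
  exact H3.
  unfold scal; simpl; unfold mult; simpl. unfold gf. rewrite sqrt_sqrt by lra. field. lra.
Qed.

Lemma A_lim0 : filterlim A (at_right 0) (locally 0).
Proof.
  apply (filterlim_filter_le_1 (F := locally 0)). apply filter_le_within.
  replace 0 with (A 0) at 2.
  2:{ unfold A. rewrite sqrt_0. unfold E. rewrite RInt_point. unfold zero; simpl. ring. }
  change (continuous (fun x => (fun y => 2 * E y) (sqrt x)) 0).
  apply (@continuous_comp R_UniformSpace R_UniformSpace R_UniformSpace).
  apply continuity_pt_filterlim, continuity_pt_sqrt. lra.
  apply (@ex_derive_continuous R_AbsRing R_NormedModule). eexists.
  apply is_derive_scal, E_deriv.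
Qed.

Lemma A_liminf : filterlim A (Rbar_locally p_infty) (locally (sqrt PI)).
Proof.
  apply filterlim_locally. intros eps.
  assert (HP : 0 < sqrt PI) by (apply sqrt_lt_R0, PI_RGT_0).
  set (d := eps * sqrt PI / 4).
  assert (Hd : 0 < d) by (unfold d; generalize (cond_pos eps); intros; apply Rmult_lt_0_compat; [nra|lra]).
  exists (Rmax 0 (- ln d)). intros s Hs.
  assert (Hs0 : 0 < s) by (generalize (Rmax_l 0 (- ln d)); lra).
  assert (Hs1 : - ln d < s) by (generalize (Rmax_r 0 (- ln d)); lra).
  change (Rabs (A s - sqrt PI) < eps).
  unfold A. replace (2 * E (sqrt s) - sqrt PI) with (2 * (E (sqrt s) - sqrt PI / 2)) by field.
  rewrite Rabs_mult, Rabs_pos_eq by lra.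
  assert (HB := E_bound (sqrt s) (sqrt_pos s)). rewrite sqrt_sqrt in HB by lra.
  assert (He : exp (- s) < d).
  { rewrite <- (exp_ln d Hd). apply exp_increasing. lra. }
  apply Rle_lt_trans with (2 * (2 * exp (- s) / sqrt PI)). lra.
  apply Rmult_lt_reg_r with (sqrt PI). lra. field_simplify. unfold d in He. rewrite (Rmult_comm (sqrt PI)). lra. lra.
Qed.

Lemma ln_lt_id y : 0 < y -> ln y < y.
Proof. intros Hy. generalize (exp_ineq1_le (ln y)). rewrite exp_ln by exact Hy. lra. Qed.

Lemma at_right0_intro (P : R -> Prop) (d : R) : 0 < d -> (forall s, 0 < s < d -> P s) -> at_right 0 P.
Proof.
  intros Hd HP. exists (mkposreal d Hd). intros y Hy Hy0.
  assert (H : Rabs (y - 0) < d) by exact Hy. apply Rabs_lt_between in H. apply HP. lra.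
Qed.

Lemma pow_lim0 x : 0 < x -> filterlim (fun s => Rpower s x * exp (- s)) (at_right 0) (locally 0).
Proof.
  intros Hx. apply filterlim_locally. intros eps.
  apply at_right0_intro with (Rpower eps (/ x)). apply exp_pos.
  intros s [Hs1 Hs2]. change (Rabs (Rpower s x * exp (- s) - 0) < eps).
  rewrite Rminus_0_r. rewrite Rabs_pos_eq.
  2:{ apply Rlt_le, Rmult_lt_0_compat; apply exp_pos. }
  assert (H1 : Rpower s x < eps).
  { replace (pos eps) with (Rpower (Rpower eps (/ x)) x).
    apply Rlt_Rpower_l; auto. rewrite Rpower_mult, Rinv_l by lra. apply Rpower_1, cond_pos. }
  assert (H2 : exp (- s) <= 1) by (rewrite <- exp_0; apply exp_mono; lra).
  assert (0 < Rpower s x) by apply exp_pos. nra.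
Qed.

Lemma pow_liminf x : 0 < x -> filterlim (fun s => Rpower s x * exp (- s)) (Rbar_locally p_infty) (locally 0).
Proof.
  intros Hx. apply filterlim_locally. intros eps.
  set (K := 2 * x + Rabs (ln eps) + 1).
  assert (HK : 1 <= K) by (unfold K; generalize (Rabs_pos (ln eps)); lra).
  exists (K * K). intros s Hs.
  change (Rabs (Rpower s x * exp (- s) - 0) < eps).
  assert (Hs0 : 0 < s) by nra.
  set (q := sqrt s). assert (Hq : q * q = s) by (apply sqrt_sqrt; lra).
  assert (Hq0 : 0 < q) by (apply sqrt_lt_R0; lra).
  assert (HqK : K < q) by nra.
  rewrite Rminus_0_r. rewrite Rabs_pos_eq.
  2:{ apply Rlt_le, Rmult_lt_0_compat; apply exp_pos. }
  unfold Rpower. rewrite <- exp_plus.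
  rewrite <- (exp_ln eps) by apply cond_pos. apply exp_increasing.
  rewrite <- Hq. rewrite ln_mult by lra.
  generalize (ln_lt_id q Hq0). intros Hl.
  assert (x * (ln q + ln q) < x * (2 * q)) by (apply Rmult_lt_compat_l; lra).
  generalize (Rle_abs (- ln eps)). rewrite Rabs_Ropp. intros Ha.
  assert (q * (2 * x - q) <= - (Rabs (ln eps) + 1)).
  { unfold K in HqK. clearbody q K. assert (h1 : q - 2*x > Rabs (ln eps) + 1)  by (clear -HqK; lra). assert (h2 : q > 1) by (generalize (Rabs_pos (ln eps)); clear -HqK Hx; intros; lra). generalize (Rabs_pos (ln eps)); intro h3. assert (h4: (q - 1) * (q - 2*x) > 0) by (apply Rmult_lt_0_compat; [clear -h2; lra | clear -h1 h3; lra]). nra. }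
  fold q. nra.
Qed.

Definition Rb := Rbar_locally p_infty.

Ltac Rgoal := match goal with |- ?a = ?b => change (@eq R a b) end.

Lemma gi_half : is_RInt_gen (gi (1/2)) (at_right 0) Rb (sqrt PI).
Proof.
  apply (is_RInt_gen_ext (fun s => exp (- s) / sqrt s)).
  - apply prod_pos'. intros s Hs. unfold gi.
    replace (1/2 - 1) with (- (/2)) by field. rewrite Rpower_Ropp, Rpower_sqrt by exact Hs.
    Rgoal. unfold Rdiv; ring.
  - replace (sqrt PI) with (sqrt PI - 0) by ring.
    apply (RInt_gen_pos A). apply A_deriv.
    + intros s Hs. apply (@ex_derive_continuous R_AbsRing R_NormedModule). auto_derive. repeat split; try lra. apply Rgt_not_eq, sqrt_lt_R0; lra.
    + apply A_lim0.
    + apply A_liminf.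
Qed.

Lemma gi_one : is_RInt_gen (gi 1) (at_right 0) Rb 1.
Proof.
  apply (is_RInt_gen_ext (fun s => exp (- s))).
  - apply prod_pos'. intros s Hs. unfold gi.
    replace (1 - 1) with 0 by ring. rewrite Rpower_O by exact Hs. Rgoal. ring.
  - replace 1 with (0 - (-1)) by ring.
    apply (RInt_gen_pos (fun s => - exp (- s))).
    + intros s _. auto_derive. auto. ring.
    + intros s Hs. apply (@ex_derive_continuous R_AbsRing R_NormedModule). auto_derive. auto.
    + apply (filterlim_filter_le_1 (F := locally 0)). apply filter_le_within.
      assert (Hc := @ex_derive_continuous R_AbsRing R_NormedModule (fun s => - exp (- s)) 0).
      unfold continuous in Hc. replace (- exp (- 0)) with (-1) in Hc by (rewrite Ropp_0, exp_0; ring). apply Hc. auto_derive. auto.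
    + apply filterlim_locally. intros eps. exists (- ln eps). intros s Hs.
      change (Rabs (- exp (- s) - 0) < eps).
      rewrite Rminus_0_r, Rabs_Ropp, Rabs_pos_eq by (apply Rlt_le, exp_pos).
      rewrite <- (exp_ln eps) by apply cond_pos. apply exp_increasing. lra.
Qed.


Definition gp (y s : R) := Rpower s y * exp (- s).

Lemma gp_deriv y s : 0 < s ->
  is_derive (gp y) s (y * Rpower s (y - 1) * exp (- s) - Rpower s y * exp (- s)).
Proof.
  intros Hs. unfold gp.
  assert (H1 : is_derive (fun s => Rpower s y) s (y * Rpower s (y - 1)))
    by (apply is_derive_Reals, derivable_pt_lim_power, Hs).
  assert (H2 : is_derive (fun s => exp (- s)) s (- exp (- s))) by (auto_derive; auto; ring).
  eapply is_derive_ext. intros t; reflexivity.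
  replace (y * Rpower s (y - 1) * exp (- s) - Rpower s y * exp (- s))
    with (y * Rpower s (y - 1) * exp (- s) + Rpower s y * (- exp (- s))) by ring.
  apply (is_derive_mult (fun s => Rpower s y) (fun s => exp (- s))); auto.
  intros; apply Rmult_comm.
Qed.

Lemma gi_succ x l : 0 < x -> is_RInt_gen (gi x) (at_right 0) Rb l ->
  is_RInt_gen (gi (x + 1)) (at_right 0) Rb (x * l).
Proof.
  intros Hx H.
  set (D := fun s => - gp x s).
  assert (HD : forall s, 0 < s -> is_derive D s (gp x s - x * gi x s)).
  { intros s Hs. unfold D.
    replace (gp x s - x * gi x s) with (- (x * Rpower s (x - 1) * exp (- s) - Rpower s x * exp (- s)))
      by (unfold gp, gi; ring).
    apply (is_derive_opp (gp x)). apply gp_deriv, Hs. }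
  apply (is_RInt_gen_ext (fun s => plus (gp x s - x * gi x s) (scal x (gi x s)))).
  - apply prod_pos'. intros s Hs. unfold gi, gp, plus, scal; simpl; unfold mult; simpl.
    replace (x + 1 - 1) with x by ring. Rgoal. ring.
  - replace (x * l) with (plus (0 - 0) (scal x l)).
    2:{ unfold plus, scal; simpl; unfold mult; simpl. ring. }
    apply (@is_RInt_gen_plus R_NormedModule (at_right 0) Rb _ _
             (fun s => gp x s - x * gi x s) (fun s => scal x (gi x s)) (0 - 0) (scal x l)).
    + apply (RInt_gen_pos D). exact HD.
      * intros s Hs. apply (@ex_derive_continuous R_AbsRing R_NormedModule).
        apply (ex_derive_minus (gp x) (fun s => x * gi x s)).
        eexists; apply gp_deriv, Hs.
        apply (ex_derive_scal (gi x)). eexists; apply (gp_deriv (x - 1)), Hs.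
      * unfold D. assert (Hl : filterlim (fun s => - gp x s) (at_right 0) (locally (- 0))).
        { apply (filterlim_comp _ _ _ (gp x) Ropp (at_right 0) (locally 0) (locally (- 0))).
          apply pow_lim0, Hx. apply (filterlim_opp 0). }
        rewrite Ropp_0 in Hl. exact Hl.
      * unfold D. assert (Hl : filterlim (fun s => - gp x s) Rb (locally (- 0))).
        { apply (filterlim_comp _ _ _ (gp x) Ropp Rb (locally 0) (locally (- 0))).
          apply pow_liminf, Hx. apply (filterlim_opp 0). }
        rewrite Ropp_0 in Hl. exact Hl.
    + apply (@is_RInt_gen_scal R_NormedModule (at_right 0) Rb _ _ (gi x) x l). exact H.
Qed.

Fixpoint Gv (k : nat) : R :=
  match k with
  | O => sqrt PI
  | S O => 1
  | S (S m as k') => (INR m + 1) / 2 * Gv m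
  end.

Lemma gi_all k : is_RInt_gen (gi ((INR k + 1) / 2)) (at_right 0) Rb (Gv k).
Proof.
  assert (H : forall n, is_RInt_gen (gi ((INR n + 1) / 2)) (at_right 0) Rb (Gv n) /\
                        is_RInt_gen (gi ((INR (S n) + 1) / 2)) (at_right 0) Rb (Gv (S n))).
  { clear k. intro n. induction n as [|k IH].
    - split. simpl. replace ((0 + 1) / 2) with (1/2) by field. apply gi_half.
      simpl. replace ((1 + 1) / 2) with 1 by field. apply gi_one.
    - split. apply IH. destruct IH as [IH1 IH2].
      replace ((INR (S (S k)) + 1) / 2) with ((INR k + 1) / 2 + 1) by (rewrite !S_INR; field).
      simpl Gv. apply gi_succ. generalize (pos_INR k); lra. exact IH1. }
  exact (proj1 (H k)).
Qed.

Lemma Gamma_pos_val k : Gamma_pos ((INR k + 1) / 2) = Gv k.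
Proof.
  unfold Gamma_pos. apply (is_RInt_gen_unique (V := R_CompleteNormedModule)).
  apply gi_all.
Qed.

Lemma Gv_pos k : 0 < Gv k.
Proof.
  assert (H : forall n, 0 < Gv n /\ 0 < Gv (S n)).
  { clear k. intro n. induction n as [|k IH]. simpl. split. apply sqrt_lt_R0, PI_RGT_0. lra.
    split. apply IH. simpl Gv. destruct IH. apply Rmult_lt_0_compat; auto.
    generalize (pos_INR k); intros; apply Rmult_lt_0_compat; lra. }
  exact (proj1 (H k)).
Qed.

Lemma Gamma_posarg x : 0 < x -> Gamma x = Gamma_pos x.
Proof.
  intros Hx. unfold Gamma.
  destruct (archimed (- x)) as [H1 H2].
  assert (Hu : (up (- x) <= 0)%Z).
  { apply Z.lt_succ_r. apply lt_IZR. rewrite succ_IZR. simpl. lra. }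
  assert (Hn : Z.to_nat (up (- x)) = O) by (destruct (up (- x)); [reflexivity | lia | reflexivity]).
  simpl. rewrite Hn. simpl. rewrite Rplus_0_r. field.
Qed.

Lemma Gamma_k1 k : Gamma ((INR k + 1) / 2) = Gv k.
Proof.
  rewrite Gamma_posarg. apply Gamma_pos_val.
  generalize (pos_INR k); lra.
Qed.

Lemma Gamma_k3 k : Gamma ((INR k + 3) / 2) = Gv (S (S k)).
Proof.
  replace ((INR k + 3) / 2) with ((INR (S (S k)) + 1) / 2) by (rewrite !S_INR; field).
  apply Gamma_k1.
Qed.

Lemma Gamma_mhalf : Gamma (- (1 / 2)) = -2 * sqrt PI.
Proof.
  unfold Gamma.
  assert (Hu : up (- - (1 / 2)) = 1%Z).
  { symmetry. apply tech_up; simpl; lra. }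
  rewrite Hu. simpl.
  replace (- (1/2) + 1) with ((INR 0 + 1) / 2) by (simpl; field).
  rewrite Gamma_pos_val. simpl. field.
Qed.


Definition bb (a : R) (k : nat) := a ^ (k + 1) / (Gv k * Gv (S (S k))).

Lemma bb_rec a k : bb a (S (S k)) = 4 * a ^ 2 * bb a k / ((INR k + 1) * (INR k + 3)).
Proof.
  unfold bb. 
  change (Gv (S (S (S (S k))))) with ((INR (S (S k)) + 1) / 2 * Gv (S (S k))).
  change (Gv (S (S k))) with ((INR k + 1) / 2 * Gv k).
  rewrite !S_INR. replace (S (S k) + 1)%nat with (S (S (k + 1))) by lia.
  simpl pow. generalize (Gv_pos k) (pos_INR k). intros. field.
  repeat split; try lra. 
Qed.

Lemma bb_pos a k : 0 < a -> 0 < bb a k.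
Proof.
  intros Ha. unfold bb. apply Rdiv_lt_0_compat. apply pow_lt, Ha.
  apply Rmult_lt_0_compat; apply Gv_pos.
Qed.

Definition MM a := bb a 0 + bb a 1 / (2 * a).

Lemma bb_bound a k : 0 < a -> bb a k <= MM a * (2 * a) ^ k / INR (fact k).
Proof.
  intros Ha.
  assert (H0 := bb_pos a 0 Ha). assert (H1 := bb_pos a 1 Ha).
  assert (H : forall n, bb a n <= MM a * (2 * a) ^ n / INR (fact n) /\
                        bb a (S n) <= MM a * (2 * a) ^ (S n) / INR (fact (S n))).
  { clear k. intro n. induction n as [|k IH].
    - unfold MM. simpl. split.
      + assert (0 <= bb a 1 / (2 * a)) by (apply Rlt_le, Rdiv_lt_0_compat; lra). lra.
      + apply Rle_trans with (bb a 1 / (2 * a) * (2 * a * 1) / 1).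
        right; field; lra.
        unfold Rdiv. apply Rmult_le_compat_r. lra. apply Rmult_le_compat_r. lra.
        assert (0 <= bb a 0) by lra. lra.
    - destruct IH as [IH1 IH2]. split. exact IH2.
      rewrite bb_rec.
      assert (Hf : 0 < INR (fact k)) by (apply lt_0_INR, lt_O_fact).
      assert (Hk := pos_INR k).
      replace (fact (S (S k))) with ((S (S k)) * (S k) * fact k)%nat by (simpl; lia).
      rewrite !mult_INR, !S_INR.
      apply Rle_trans with (4 * a ^ 2 * (MM a * (2 * a) ^ k / INR (fact k)) / ((INR k + 1) * (INR k + 3))).
      { unfold Rdiv. apply Rmult_le_compat_r. apply Rlt_le, Rinv_0_lt_compat. nra.
        apply Rmult_le_compat_l. nra. exact IH1. }
      assert (HM : 0 <= MM a * (2 * a) ^ k).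
      { apply Rmult_le_pos. unfold MM. apply Rlt_le. apply Rplus_lt_0_compat. lra.
        apply Rdiv_lt_0_compat; lra. apply pow_le; lra. }
      replace (4 * a ^ 2 * (MM a * (2 * a) ^ k / INR (fact k)) / ((INR k + 1) * (INR k + 3)))
        with (MM a * (2 * a) ^ k * (4 * a^2) / (INR (fact k) * (INR k + 1) * (INR k + 3))) by (field; lra).
      replace (MM a * (2 * a) ^ S (S k) / ((INR k + 1 + 1) * (INR k + 1) * INR (fact k)))
        with (MM a * (2 * a) ^ k * (4 * a^2) / (INR (fact k) * (INR k + 1) * (INR k + 2))) by (simpl; field; lra).
      unfold Rdiv. apply Rmult_le_compat_l. apply Rmult_le_pos. exact HM. nra.
      apply Rinv_le_contravar. apply Rmult_lt_0_compat. nra. lra.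
      apply Rmult_le_compat_l. nra. lra. }
  exact (proj1 (H k)).
Qed.

Lemma pow_nR (y : R) k : @pow_n R_AbsRing y k = y ^ k.
Proof. induction k as [|k IH]. reflexivity. simpl. rewrite IH. reflexivity. Qed.

Lemma bb_disk a r : 0 < a -> CV_disk (bb a) r.
Proof.
  intros Ha. unfold CV_disk.
  assert (He := is_exp_Reals (2 * a * Rabs r)).
  assert (He' : ex_pseries (fun n => / INR (fact n)) (2 * a * Rabs r)) by (eexists; exact He).
  apply (ex_series_scal_l (MM a)) in He'.
  apply (@ex_series_le R_AbsRing R_CompleteNormedModule _ _) with (2 := He').
  intros n. unfold norm; simpl. unfold abs; simpl. rewrite Rabs_Rabsolu.
  unfold scal; simpl; unfold mult; simpl. replace (MM a * (pow_n (2 * a * Rabs r) n * / INR (fact n))) with (MM a * ((2*a*Rabs r)^n * / INR (fact n))) by (rewrite <- pow_nR; reflexivity).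
  rewrite Rabs_mult, <- RPow_abs. rewrite (Rabs_pos_eq (bb a n)) by (apply Rlt_le, bb_pos, Ha).
  apply Rle_trans with (MM a * (2 * a) ^ n / INR (fact n) * Rabs r ^ n).
  apply Rmult_le_compat_r. apply pow_le, Rabs_pos. apply bb_bound, Ha.
  right. transitivity (MM a * ((2*a*Rabs r)^n * / INR (fact n))). rewrite !Rpow_mult_distr. field. apply not_0_INR, fact_neq_0. f_equal; f_equal; symmetry; apply pow_nR.
Qed.

Lemma bb_radius a x : 0 < a -> Rbar_lt (Rabs x) (CV_radius (bb a)).
Proof.
  intros Ha.
  set (r := Rabs x + 1).
  assert (Hd := bb_disk a r Ha).
  assert (Hl := ex_series_lim_0 _ Hd).
  destruct (filterlim_bounded (fun n => Rabs (bb a n * r ^ n))) as [M HM].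
  { exists 0. exact Hl. }
  assert (Hr : Rbar_le r (CV_radius (bb a))).
  { destruct (CV_radius_bounded (bb a)) as [Hub _]. apply Hub.
    exists M. intros n. generalize (HM n). unfold norm; simpl; unfold abs; simpl.
    rewrite Rabs_Rabsolu. auto. }
  destruct (CV_radius (bb a)) as [c| |]; simpl in *; unfold r in Hr; lra || auto.
Qed.

Lemma bbd_radius a x : 0 < a -> Rbar_lt (Rabs x) (CV_radius (PS_derive (bb a))).
Proof. intros Ha. rewrite CV_radius_derive. apply bb_radius, Ha. Qed.

Lemma bbdd_radius a x : 0 < a -> Rbar_lt (Rabs x) (CV_radius (PS_derive (PS_derive (bb a)))).
Proof. intros Ha. rewrite !CV_radius_derive. apply bb_radius, Ha. Qed.

Lemma exps_b a x : 0 < a -> ex_pseries (bb a) x.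
Proof. intros Ha. apply CV_radius_inside, bb_radius, Ha. Qed.
Lemma exps_d1 a x : 0 < a -> ex_pseries (PS_derive (bb a)) x.
Proof. intros Ha. apply CV_radius_inside, bbd_radius, Ha. Qed.
Lemma exps_d2 a x : 0 < a -> ex_pseries (PS_derive (PS_derive (bb a))) x.
Proof. intros Ha. apply CV_radius_inside, bbdd_radius, Ha. Qed.

Lemma ode a r : 0 < a ->
  r ^ 2 * PSeries (PS_derive (PS_derive (bb a))) r + r * PSeries (PS_derive (bb a)) r - PSeries (bb a) r
  = 4 * a ^ 2 * r ^ 2 * PSeries (bb a) r - bb a 0.
Proof.
  intros Ha.
  set (b := bb a). set (d1 := PS_derive b). set (d2 := PS_derive d1).
  set (S1 := PS_incr_1 (PS_incr_1 d2)). set (S2 := PS_incr_1 d1).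
  set (S3 := @PS_incr_1 R_AbsRing R_NormedModule (PS_decr_1 b)).
  set (S4 := PS_scal (4 * a ^ 2) (@PS_incr_1 R_AbsRing R_NormedModule (PS_incr_1 b))).
  assert (Eb : ex_pseries b r) by apply exps_b, Ha.
  assert (E1 : ex_pseries S1 r) by (apply ex_pseries_incr_1, ex_pseries_incr_1, exps_d2, Ha).
  assert (E2 : ex_pseries S2 r) by (apply ex_pseries_incr_1, exps_d1, Ha).
  assert (E3 : ex_pseries S3 r).
  { apply ex_pseries_incr_1, ex_pseries_decr_1. 2: exact Eb.
    destruct (Req_dec r 0) as [->|Hr]. left; reflexivity. right. exists (/ r).
    unfold mult, one; simpl. field. exact Hr. }
  assert (E4 : ex_pseries S4 r).
  { apply ex_pseries_scal. unfold mult; simpl. ring. apply ex_pseries_incr_1, ex_pseries_incr_1, Eb. }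
  assert (H0 : PSeries (PS_minus (PS_minus (PS_plus S1 S2) S3) S4) r = 0).
  { rewrite <- (PSeries_const_0 r). apply PSeries_ext. intros n.
    unfold PS_minus, PS_plus, S1, S2, S3, S4, PS_scal, PS_incr_1, d2, d1, PS_derive, PS_decr_1.
    unfold minus, plus, opp, scal, zero, mult; cbn -[INR bb pow].
    destruct n as [|[|m]]; cbn -[INR bb pow]; Rgoal; unfold mult; cbn -[INR bb pow].
    - ring.
    - rewrite S_INR. simpl INR. ring.
    - unfold b. rewrite bb_rec. rewrite !S_INR. field. generalize (pos_INR m); lra. }
  rewrite PSeries_minus, PSeries_minus, PSeries_plus in H0; auto.
  2: apply ex_pseries_plus; auto.
  2: apply ex_pseries_minus; auto; apply ex_pseries_plus; auto.
  unfold S1, S2, S3, S4 in H0. rewrite PSeries_scal, !PSeries_incr_1 in H0.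
  rewrite (PSeries_decr_1 b r Eb) in H0 |- *.
  replace (r ^ 2) with (r * r) by ring. unfold minus, plus, opp in H0; simpl in H0. apply Rminus_diag_uniq. rewrite <- H0. ring.
Qed.


Definition P0 a r := PSeries (bb a) r.
Definition P1 a r := PSeries (PS_derive (bb a)) r.
Definition P2 a r := PSeries (PS_derive (PS_derive (bb a))) r.

Lemma P0_der a r : 0 < a -> is_derive (P0 a) r (P1 a r).
Proof. intros Ha. apply is_derive_PSeries, bb_radius, Ha. Qed.
Lemma P1_der a r : 0 < a -> is_derive (P1 a) r (P2 a r).
Proof. intros Ha. apply is_derive_PSeries, bbd_radius, Ha. Qed.

Lemma DP0 a r : 0 < a -> Derive (fun x => P0 a x) r = P1 a r.
Proof. intros Ha. apply is_derive_unique, P0_der, Ha. Qed.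
Lemma DP1 a r : 0 < a -> Derive (fun x => P1 a x) r = P2 a r.
Proof. intros Ha. apply is_derive_unique, P1_der, Ha. Qed.

Definition F0 a v := P0 a (sqrt v) / sqrt v.
Definition F1 a v := (sqrt v * P1 a (sqrt v) - P0 a (sqrt v)) / (2 * sqrt v ^ 3).
Definition F2 a v := (sqrt v ^ 2 * P2 a (sqrt v) - 3 * sqrt v * P1 a (sqrt v) + 3 * P0 a (sqrt v)) / (4 * sqrt v ^ 5).

Lemma sq_pos v : 0 < v -> 0 < sqrt v.
Proof. apply sqrt_lt_R0. Qed.

Lemma F0_der a v : 0 < a -> 0 < v -> is_derive (F0 a) v (F1 a v).
Proof.
  intros Ha Hv. unfold F0. assert (Hq := sq_pos v Hv).
  auto_derive.
  - repeat split; try lra; try (apply Rgt_not_eq; repeat apply Rmult_lt_0_compat; lra). eexists; apply P0_der, Ha.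
  - rewrite DP0 by exact Ha. unfold F1. field. lra.
Qed.

Lemma F1_der a v : 0 < a -> 0 < v -> is_derive (F1 a) v (F2 a v).
Proof.
  intros Ha Hv. unfold F1. assert (Hq := sq_pos v Hv).
  auto_derive.
  - repeat split; try lra; try (apply Rgt_not_eq; repeat apply Rmult_lt_0_compat; lra). eexists; apply P1_der, Ha. eexists; apply P0_der, Ha.
  - rewrite DP0 by exact Ha.
    rewrite DP1 by exact Ha. unfold F2. field. lra.
Qed.

Lemma F_ident a v : 0 < a -> 0 < v ->
  v * F2 a v + 2 * F1 a v = a ^ 2 * F0 a v - bb a 0 / (4 * sqrt v ^ 3).
Proof.
  intros Ha Hv. assert (Hq := sq_pos v Hv).
  replace v with (sqrt v ^ 2) at 1 by (simpl; rewrite Rmult_1_r; apply sqrt_sqrt; lra).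
  unfold F0, F1, F2.
  assert (Ho := ode a (sqrt v) Ha). fold (P0 a (sqrt v)) (P1 a (sqrt v)) (P2 a (sqrt v)) in Ho.
  set (q := sqrt v) in *. clearbody q.
  replace (P2 a q) with ((4 * a ^ 2 * q ^ 2 * P0 a q - bb a 0 - q * P1 a q + P0 a q) / q ^ 2).
  field. lra.
  rewrite <- Ho. field. lra.
Qed.

Lemma bb0 a : bb a 0 = 2 * a / PI.
Proof.
  unfold bb. simpl Gv. simpl. 
  assert (HP : 0 < sqrt PI) by (apply sqrt_lt_R0, PI_RGT_0).
  assert (HP2 : sqrt PI * sqrt PI = PI) by (apply sqrt_sqrt; generalize PI_RGT_0; lra).
  replace (2 * a / PI) with (2 * a / (sqrt PI * sqrt PI)) by (rewrite HP2; reflexivity). Rgoal. field. lra.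
Qed.


Lemma pd_eq c lam y1 y2 y3 t : 0 < c -> 0 < lam -> 0 < c^2*t^2 - (y1^2+y2^2+y3^2) ->
  p_dens c lam y1 y2 y3 t =
  lam / (2 * c) / (PI * (exp (lam * t) - 1)) * F0 (lam / (2 * c)) (c^2*t^2 - (y1^2+y2^2+y3^2)).
Proof.
  intros Hc Hl Hw. unfold p_dens, norm3.
  rewrite pow2_sqrt by nra.
  set (w := c^2*t^2 - (y1^2+y2^2+y3^2)) in *.
  set (a := lam / (2 * c)).
  assert (Hq := sq_pos w Hw). unfold F0, P0.
  set (q := sqrt w) in *.
  rewrite (Series_ext _ (fun k => / q * (bb a k * q ^ k))).
  2:{ intros k. rewrite Gamma_k1, Gamma_k3.
      replace (INR k - 1) with (INR k + - (1)) by ring.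
      rewrite Rpower_plus, Rpower_Ropp, Rpower_1, Rpower_pow by lra.
      unfold bb. replace (k + 1)%nat with (S k) by lia.
      generalize (Gv_pos k) (Gv_pos (S (S k))); intros. field. lra. }
  rewrite Series_scal_l. unfold PSeries. unfold Rdiv. ring.
Qed.

Lemma second_deriv (f g0 g1 : R -> R) (x d2 : R) (P : R -> Prop) :
  locally x P -> (forall s, P s -> f s = g0 s) -> (forall s, P s -> is_derive g0 s (g1 s)) ->
  is_derive g1 x d2 ->
  twice_derivable f x /\ Derive f x = g1 x /\ D2 f x = d2.
Proof.
  intros HP Hf Hg0 Hg1.
  assert (HL := locally_locally _ _ HP).
  assert (HD : locally x (fun s => Derive f s = g1 s)).
  { generalize HL. apply filter_imp. intros s Hs.
    rewrite (Derive_ext_loc f g0). apply is_derive_unique, Hg0.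
    apply (locally_singleton _ _ Hs).
    generalize Hs. apply filter_imp. intros y Hy. apply Hf, Hy. }
  assert (Hfx : is_derive f x (g1 x)).
  { apply (is_derive_ext_loc g0). generalize HP. apply filter_imp. intros y Hy. symmetry. apply Hf, Hy.
    apply Hg0, (locally_singleton _ _ HP). }
  assert (HDD : is_derive (fun s => Derive f s) x d2).
  { apply (is_derive_ext_loc g1). generalize HD. apply filter_imp. intros y Hy. symmetry. exact Hy.
    exact Hg1. }
  split. split. eexists; exact Hfx. eexists; exact HDD.
  split. apply is_derive_unique, Hfx.
  unfold D2. apply is_derive_unique, HDD.
Qed.

Lemma locally_gt (g : R -> R) x : continuous g x -> 0 < g x -> locally x (fun s => 0 < g s).
Proof.
  intros Hc Hg. apply Hc. exists (mkposreal (g x) Hg). intros y Hy.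
  assert (H : Rabs (y - g x) < g x) by exact Hy. apply Rabs_lt_between in H. lra.
Qed.

Lemma DF0 a v : 0 < a -> 0 < v -> Derive (fun x => F0 a x) v = F1 a v.
Proof. intros Ha Hv. apply is_derive_unique, F0_der; auto. Qed.
Lemma DF1 a v : 0 < a -> 0 < v -> Derive (fun x => F1 a x) v = F2 a v.
Proof. intros Ha Hv. apply is_derive_unique, F1_der; auto. Qed.

Ltac normF tgt :=
  repeat (match goal with |- context [?G ?a ?u] =>
    match G with F0 => idtac | F1 => idtac | F2 => idtac end;
    progress (replace u with tgt by ring) end).

Lemma ydir (f : R -> R) a K al x : 0 < a -> 0 < al - x ^ 2 ->
  (forall s, 0 < al - s ^ 2 -> f s = K * F0 a (al - s ^ 2)) ->
  twice_derivable f x /\ D2 f x = K * (4 * x ^ 2 * F2 a (al - x ^ 2) - 2 * F1 a (al - x ^ 2)).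
Proof.
  intros Ha Hx Hf.
  destruct (second_deriv f (fun s => K * F0 a (al - s ^ 2)) (fun s => K * (F1 a (al - s ^ 2) * (-2 * s)))
     x (K * (4 * x ^ 2 * F2 a (al - x ^ 2) - 2 * F1 a (al - x ^ 2))) (fun s => 0 < al - s ^ 2))
    as [H1 [H2 H3]].
  - apply (locally_gt (fun s => al - s ^ 2)). apply (@ex_derive_continuous R_AbsRing R_NormedModule).
    auto_derive. auto. exact Hx.
  - exact Hf.
  - intros s Hs. auto_derive. eexists; apply F0_der; auto; simpl in *; nra.
    rewrite DF0 by (auto; simpl in *; nra). normF (al - s ^ 2). ring.
  - auto_derive. eexists; apply F1_der; auto; simpl in *; nra.
    rewrite DF1 by (auto; simpl in *; nra). normF (al - x ^ 2). ring.
  - split; auto.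
Qed.

Lemma tdir (f : R -> R) a lam c n2 t : 0 < a -> 0 < lam -> 0 < t -> 0 < c ^ 2 * t ^ 2 - n2 ->
  (forall s, 0 < s -> 0 < c ^ 2 * s ^ 2 - n2 -> f s = a / (PI * (exp (lam * s) - 1)) * F0 a (c ^ 2 * s ^ 2 - n2)) ->
  let E := exp (lam * t) in let e := E - 1 in let w := c ^ 2 * t ^ 2 - n2 in
  twice_derivable f t /\
  Derive f t = a / PI * (- lam * E / e ^ 2 * F0 a w + 2 * c ^ 2 * t / e * F1 a w) /\
  D2 f t = a / PI * (lam ^ 2 * E * (E + 1) / e ^ 3 * F0 a w - 2 * lam * E / e ^ 2 * (2 * c ^ 2 * t) * F1 a w
                     + 2 * c ^ 2 / e * F1 a w + (2 * c ^ 2 * t) ^ 2 / e * F2 a w).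
Proof.
  intros Ha Hl Ht Hw Hf E e w.
  assert (He : forall s, 0 < s -> 0 < exp (lam * s) - 1).
  { intros s Hs. assert (1 < exp (lam * s)). { rewrite <- exp_0. apply exp_increasing. nra. } lra. }
  assert (HPI := PI_RGT_0).
  destruct (second_deriv f (fun s => a / (PI * (exp (lam * s) - 1)) * F0 a (c ^ 2 * s ^ 2 - n2))
     (fun s => a / PI * (- lam * exp (lam * s) / (exp (lam * s) - 1) ^ 2 * F0 a (c ^ 2 * s ^ 2 - n2)
                         + 2 * c ^ 2 * s / (exp (lam * s) - 1) * F1 a (c ^ 2 * s ^ 2 - n2)))
     t (a / PI * (lam ^ 2 * E * (E + 1) / e ^ 3 * F0 a w - 2 * lam * E / e ^ 2 * (2 * c ^ 2 * t) * F1 a w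
                     + 2 * c ^ 2 / e * F1 a w + (2 * c ^ 2 * t) ^ 2 / e * F2 a w))
     (fun s => 0 < s /\ 0 < c ^ 2 * s ^ 2 - n2)) as [H1 [H2 H3]].
  - apply filter_and. apply (locally_gt (fun s => s)). apply (@ex_derive_continuous R_AbsRing R_NormedModule).
    auto_derive. auto. exact Ht.
    apply (locally_gt (fun s => c ^ 2 * s ^ 2 - n2)). apply (@ex_derive_continuous R_AbsRing R_NormedModule).
    auto_derive. auto. exact Hw.
  - intros s [Hs1 Hs2]. apply Hf; auto.
  - intros s [Hs1 Hs2]. specialize (He s Hs1). auto_derive.
    + repeat split; try (eexists; apply F0_der; auto; simpl in *; nra);
        try (apply Rmult_integral_contrapositive_currified; lra); auto.
    + rewrite DF0 by (auto; simpl in *; nra). normF (c ^ 2 * s ^ 2 - n2). field. lra.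
  - specialize (He t Ht). auto_derive.
    + assert (He' : 0 < exp (lam * t) + - (1)) by lra.
      split. apply Rgt_not_eq. apply Rmult_lt_0_compat. lra. lra.
      split. eexists; apply F0_der; auto; simpl in *; nra.
      split. lra.
      split. eexists; apply F1_der; auto; simpl in *; nra. exact I.
    + rewrite DF0 by (auto; simpl in *; nra). rewrite DF1 by (auto; simpl in *; nra).
      normF (c ^ 2 * t ^ 2 - n2). unfold e, E, w. field. lra.
  - split; auto.
Qed.

Lemma coef3_val c lam y1 y2 y3 t : 0 < exp (lam * t) - 1 -> 0 < c ^ 2 * t ^ 2 - (y1 ^ 2 + y2 ^ 2 + y3 ^ 2) ->
  coef3 c lam y1 y2 y3 t =
  - lam ^ 2 / (2 * PI ^ 2 * (exp (lam * t) - 1) * sqrt (c ^ 2 * t ^ 2 - (y1 ^ 2 + y2 ^ 2 + y3 ^ 2)) ^ 3).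
Proof.
  intros He Hw. unfold coef3, norm3. rewrite pow2_sqrt by nra.
  set (w := c ^ 2 * t ^ 2 - (y1 ^ 2 + y2 ^ 2 + y3 ^ 2)) in *.
  assert (Hq := sq_pos w Hw).
  assert (HP : 0 < sqrt PI) by (apply sqrt_lt_R0, PI_RGT_0).
  assert (HP2 : sqrt PI * sqrt PI = PI) by (apply sqrt_sqrt; generalize PI_RGT_0; lra).
  assert (Hq2 : sqrt w * sqrt w = w) by (apply sqrt_sqrt; lra).
  rewrite Gamma_mhalf.
  replace (- (3 / 2)) with (- (1 + / 2)) by field.
  rewrite Rpower_Ropp, Rpower_plus, Rpower_1, Rpower_sqrt by lra.
  assert (HS : sqrt (PI ^ 3) = PI * sqrt PI).
  { replace (PI ^ 3) with ((PI * sqrt PI) * (PI * sqrt PI)).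
    apply sqrt_square. generalize PI_RGT_0; intros; apply Rmult_le_pos; lra.
    transitivity (PI * PI * (sqrt PI * sqrt PI)). ring. rewrite HP2; ring. }
  rewrite HS.
  replace (sqrt w ^ 3) with (w * sqrt w) by (replace (w * sqrt w) with (sqrt w * sqrt w * sqrt w) by (rewrite Hq2; reflexivity); ring).
  Rgoal. replace (PI ^ 2) with (PI * (sqrt PI * sqrt PI)) by (rewrite HP2; ring). field. repeat split; try lra.
  generalize PI_RGT_0; lra.
Qed.

Theorem theorem3p5 (c lam : R) (hc : 0 < c) (hlam : 0 < lam) :
  forall (y1 y2 y3 t : R), 0 < t -> norm3 y1 y2 y3 < c * t ->
    let u := p_dens c lam in
    twice_derivable (fun s => u y1 y2 y3 s) t /\
    twice_derivable (fun s => u s y2 y3 t) y1 /\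
    twice_derivable (fun s => u y1 s y3 t) y2 /\
    twice_derivable (fun s => u y1 y2 s t) y3 /\
    D2 (fun s => u y1 y2 y3 s) t
      + coef1 lam t * Derive (fun s => u y1 y2 y3 s) t
      - c ^ 2 * (D2 (fun s => u s y2 y3 t) y1
                 + D2 (fun s => u y1 s y3 t) y2
                 + D2 (fun s => u y1 y2 s t) y3)
    = coef2 lam t * u y1 y2 y3 t + coef3 c lam y1 y2 y3 t.
Proof.
  intros y1 y2 y3 t Ht Hn u.
  set (a := lam / (2 * c)).
  assert (Ha : 0 < a) by (unfold a; apply Rdiv_lt_0_compat; lra).
  assert (Hn0 : 0 <= norm3 y1 y2 y3) by apply sqrt_pos.
  assert (Hn2 : norm3 y1 y2 y3 ^ 2 = y1 ^ 2 + y2 ^ 2 + y3 ^ 2) by (unfold norm3; apply pow2_sqrt; nra).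
  assert (Hw : 0 < c ^ 2 * t ^ 2 - (y1 ^ 2 + y2 ^ 2 + y3 ^ 2)) by nra.
  assert (He : 0 < exp (lam * t) - 1).
  { assert (1 < exp (lam * t)). { rewrite <- exp_0. apply exp_increasing. nra. } lra. }
  assert (HPI := PI_RGT_0).
  set (K := a / (PI * (exp (lam * t) - 1))).
  destruct (tdir (fun s => u y1 y2 y3 s) a lam c (y1 ^ 2 + y2 ^ 2 + y3 ^ 2) t Ha hlam Ht Hw) as [Tt [Dt D2t]].
  { intros s Hs1 Hs2. unfold u. rewrite pd_eq; auto. }
  destruct (ydir (fun s => u s y2 y3 t) a K (c ^ 2 * t ^ 2 - (y2 ^ 2 + y3 ^ 2)) y1 Ha) as [T1 D21].
  { replace (c ^ 2 * t ^ 2 - (y2 ^ 2 + y3 ^ 2) - y1 ^ 2) with (c ^ 2 * t ^ 2 - (y1 ^ 2 + y2 ^ 2 + y3 ^ 2)) by ring. exact Hw. }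
  { intros s Hs. unfold u. rewrite pd_eq; auto.
    replace (c ^ 2 * t ^ 2 - (s ^ 2 + y2 ^ 2 + y3 ^ 2)) with (c ^ 2 * t ^ 2 - (y2 ^ 2 + y3 ^ 2) - s ^ 2) by ring. reflexivity.
    replace (c ^ 2 * t ^ 2 - (s ^ 2 + y2 ^ 2 + y3 ^ 2)) with (c ^ 2 * t ^ 2 - (y2 ^ 2 + y3 ^ 2) - s ^ 2) by ring. exact Hs. }
  destruct (ydir (fun s => u y1 s y3 t) a K (c ^ 2 * t ^ 2 - (y1 ^ 2 + y3 ^ 2)) y2 Ha) as [T2 D22].
  { replace (c ^ 2 * t ^ 2 - (y1 ^ 2 + y3 ^ 2) - y2 ^ 2) with (c ^ 2 * t ^ 2 - (y1 ^ 2 + y2 ^ 2 + y3 ^ 2)) by ring. exact Hw. }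
  { intros s Hs. unfold u. rewrite pd_eq; auto.
    replace (c ^ 2 * t ^ 2 - (y1 ^ 2 + s ^ 2 + y3 ^ 2)) with (c ^ 2 * t ^ 2 - (y1 ^ 2 + y3 ^ 2) - s ^ 2) by ring. reflexivity.
    replace (c ^ 2 * t ^ 2 - (y1 ^ 2 + s ^ 2 + y3 ^ 2)) with (c ^ 2 * t ^ 2 - (y1 ^ 2 + y3 ^ 2) - s ^ 2) by ring. exact Hs. }
  destruct (ydir (fun s => u y1 y2 s t) a K (c ^ 2 * t ^ 2 - (y1 ^ 2 + y2 ^ 2)) y3 Ha) as [T3 D23].
  { replace (c ^ 2 * t ^ 2 - (y1 ^ 2 + y2 ^ 2) - y3 ^ 2) with (c ^ 2 * t ^ 2 - (y1 ^ 2 + y2 ^ 2 + y3 ^ 2)) by ring. exact Hw. }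
  { intros s Hs. unfold u. rewrite pd_eq; auto.
    replace (c ^ 2 * t ^ 2 - (y1 ^ 2 + y2 ^ 2 + s ^ 2)) with (c ^ 2 * t ^ 2 - (y1 ^ 2 + y2 ^ 2) - s ^ 2) by ring. reflexivity.
    replace (c ^ 2 * t ^ 2 - (y1 ^ 2 + y2 ^ 2 + s ^ 2)) with (c ^ 2 * t ^ 2 - (y1 ^ 2 + y2 ^ 2) - s ^ 2) by ring. exact Hs. }
  split; [exact Tt|]. split; [exact T1|]. split; [exact T2|]. split; [exact T3|].
  rewrite D2t, Dt, D21, D22, D23.
  replace (c ^ 2 * t ^ 2 - (y2 ^ 2 + y3 ^ 2) - y1 ^ 2) with (c ^ 2 * t ^ 2 - (y1 ^ 2 + y2 ^ 2 + y3 ^ 2)) by ring.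
  replace (c ^ 2 * t ^ 2 - (y1 ^ 2 + y3 ^ 2) - y2 ^ 2) with (c ^ 2 * t ^ 2 - (y1 ^ 2 + y2 ^ 2 + y3 ^ 2)) by ring.
  replace (c ^ 2 * t ^ 2 - (y1 ^ 2 + y2 ^ 2) - y3 ^ 2) with (c ^ 2 * t ^ 2 - (y1 ^ 2 + y2 ^ 2 + y3 ^ 2)) by ring.
  unfold u. rewrite pd_eq; auto. rewrite coef3_val; auto. fold a.
  set (w := c ^ 2 * t ^ 2 - (y1 ^ 2 + y2 ^ 2 + y3 ^ 2)) in *.
  assert (HF := F_ident a w Ha Hw). rewrite bb0 in HF.
  assert (Hq := sq_pos w Hw).
  replace (F2 a w) with ((a ^ 2 * F0 a w - 2 * a / PI / (4 * sqrt w ^ 3) - 2 * F1 a w) / w)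
    by (rewrite <- HF; field; lra).
  unfold coef1, coef2, K, w, a. field.
  repeat split; try lra. apply Rgt_not_eq, Hq. replace ((c * t) ^ 2) with (c ^ 2 * t ^ 2) by ring. apply Rgt_not_eq, Hw.
Qed.
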